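(* Let $f\colon U\otimes V\rightarrow W$ be a surjective multiplication and let $K$ be the kernel of $f$. Let $R$ be a representation of $f$ of dimension vector $\alpha$ such that the composition of linear maps $R(0)\otimes K\rightarrow R(0)\otimes U\otimes V\rightarrow R(1)\otimes V$ (the first map induced by the inclusion $K\subseteq U\otimes V$, the second equal to $R(\phi_{01})\otimes I_V$) is injective. Then the point of $R(f,\alpha)$ corresponding to $R$ lies in the left general component of $R(f,\alpha)$.
   Context: Fix a ground field $k$. A multiplication is a linear map $f\colon U\otimes V\rightarrow W$ of finite dimensional $k$-vector spaces. A representation $R$ of $f$ consists of finite dimensional vector spaces $R(0),R(1),R(2)$ and linear maps $R(\phi_{01})\colon R(0)\otimes U\rightarrow R(1)$, $R(\phi_{12})\colon R(1)\otimes V\rightarrow R(2)$, $R(\phi_{02})\colon R(0)\otimes W\rightarrow R(2)$ with $R(\phi_{12})\circ(R(\phi_{01})\otimes I_V)=R(\phi_{02})\circ(I_{R(0)}\otimes f)$. Its dimension vector is $(\dim R(0)\ \dim R(1)\ \dim R(2))$. For $\alpha=(a\ b\ c)$, $R(f,\alpha)$ is the closed subvariety of $\mathrm{Hom}(k^a\otimes U,k^b)\times\mathrm{Hom}(k^b\otimes V,k^c)\times\mathrm{Hom}(k^a\otimes W,k^c)$ of triples satisfying this relation; a representation of dimension vector $\alpha$ corresponds (after choosing bases) to a point of $R(f,\alpha)$. An irreducible component $C$ of $R(f,\alpha)$ is left general if the restriction morphism $C\rightarrow \mathrm{Hom}(k^a\otimes U,k^b)$, $(\phi_{01},\phi_{12},\phi_{02})\mapsto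 \phi_{01}$, is dominant. There is exactly one left general component of $R(f,\alpha)$, called the left general component. *)

(* Defs.v *)
From HB Require Import structures.
From mathcomp Require Import all_boot all_algebra.
Set Implicit Arguments. Unset Strict Implicit. Unset Printing Implicit Defensive.
Import GRing.Theory.
Local Open Scope ring_scope.

Inductive polyfun (k : fieldType) (X : Type) : ((X -> k) -> k) -> Prop :=
| pf_const (c : k) : polyfun (fun _ => c)
| pf_coord (i : X) : polyfun (fun x => x i)
| pf_add p q : polyfun p -> polyfun q -> polyfun (fun x => p x + q x)
| pf_mul p q : polyfun p -> polyfun q -> polyfun (fun x => p x * q x).

Definition subsetP {T : Type} (A B : T -> Prop) : Prop := forall x, A x -> B x.

Definition zclosed (k : fieldType) (X : Type) (Z : (X -> k) -> Prop) : Prop :=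
  exists S : ((X -> k) -> k) -> Prop,
    (forall p, S p -> polyfun p) /\
    (forall x, Z x <-> (forall p, S p -> p x = 0)).

Definition zirreducible (k : fieldType) (X : Type) (Z : (X -> k) -> Prop) : Prop :=
  (exists x, Z x) /\
  forall F1 F2 : (X -> k) -> Prop, zclosed F1 -> zclosed F2 ->
    subsetP Z (fun x => F1 x \/ F2 x) -> subsetP Z F1 \/ subsetP Z F2.

Definition irr_component (k : fieldType) (X : Type) (Y C : (X -> k) -> Prop) : Prop :=
  [/\ zclosed C, subsetP C Y, zirreducible C &
      forall C', zirreducible C' -> subsetP C C' -> subsetP C' Y -> subsetP C' C].

Definition zdense (k : fieldType) (X : Type) (Z : (X -> k) -> Prop) : Prop :=
  forall F, zclosed F -> subsetP Z F -> forall x, F x.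

(* U = k^u, V = k^v, W = k^w (bases fixed); the multiplication f : U (x) V -> W is
   given by its structure constants: f (e_i (x) e_j) = \sum_l f i j l e_l. *)

Definition rep_coord (a b c u v w : nat) : Type :=
  (('I_a * 'I_u * 'I_b) + ('I_b * 'I_v * 'I_c) + ('I_a * 'I_w * 'I_c))%type.

Section Rep.
Variables (k : fieldType) (a b c u v w : nat).
Local Notation pt := (rep_coord a b c u v w -> k).

(* R(phi01)(e_p (x) e_i) = \sum_q phi01 x p i q e_q, etc. *)
Definition phi01 (x : pt) (p : 'I_a) (i : 'I_u) (q : 'I_b) : k := x (inl (inl (p, i, q))).
Definition phi12 (x : pt) (q : 'I_b) (j : 'I_v) (r : 'I_c) : k := x (inl (inr (q, j, r))).
Definition phi02 (x : pt) (p : 'I_a) (l : 'I_w) (r : 'I_c) : k := x (inr (p, l, r)).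

(* R(f, alpha): R(phi12) o (R(phi01) (x) I_V) = R(phi02) o (I (x) f). *)
Definition Rfa (f : 'I_u -> 'I_v -> 'I_w -> k) : pt -> Prop :=
  fun x => forall (p : 'I_a) (i : 'I_u) (j : 'I_v) (r : 'I_c),
    \sum_(q < b) phi01 x p i q * phi12 x q j r
    = \sum_(l < w) f i j l * phi02 x p l r.

(* Restriction morphism to Hom(k^a (x) U, k^b). *)
Definition proj01 (x : pt) : 'I_a * 'I_u * 'I_b -> k := fun y => x (inl (inl y)).

Definition left_general (C : pt -> Prop) : Prop :=
  zdense (fun y => exists x, C x /\ proj01 x = y).

Definition surjective_mult (f : 'I_u -> 'I_v -> 'I_w -> k) : Prop :=
  forall z : 'I_w -> k, exists t : 'I_u -> 'I_v -> k,
    forall l, \sum_(i < u) \sum_(j < v) f i j l * t i j = z l.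

(* R(0) (x) K, viewed inside R(0) (x) U (x) V = k^a (x) U (x) V:
   tensors t with t(p,-,-) in K = ker f for every p. *)
Definition in_R0_tensor_ker (f : 'I_u -> 'I_v -> 'I_w -> k)
  (t : 'I_a -> 'I_u -> 'I_v -> k) : Prop :=
  forall (p : 'I_a) (l : 'I_w), \sum_(i < u) \sum_(j < v) f i j l * t p i j = 0.

Definition phi01_tensor_V (x : pt) (t : 'I_a -> 'I_u -> 'I_v -> k)
  : 'I_b -> 'I_v -> k :=
  fun q j => \sum_(p < a) \sum_(i < u) phi01 x p i q * t p i j.

Definition ker_map_injective (f : 'I_u -> 'I_v -> 'I_w -> k) (x : pt) : Prop :=
  forall t : 'I_a -> 'I_u -> 'I_v -> k,
    in_R0_tensor_ker f t -> (forall q j, phi01_tensor_V x t q j = 0) ->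
    forall p i j, t p i j = 0.

End Rep.

(* Main.v *)
Require Import Defs.
From HB Require Import structures.
From mathcomp Require Import all_boot all_algebra.
Local Open Scope ring_scope.
From Stdlib Require Import FunctionalExtensionality Classical.
Set Implicit Arguments. Unset Strict Implicit. Unset Printing Implicit Defensive.
Import GRing.Theory.
Local Open Scope ring_scope.

Section PF.
Variable k : fieldType.

Lemma pf_ext (X : Type) (p q : (X -> k) -> k) : (forall z, p z = q z) -> polyfun p -> polyfun q.
Proof. by move=> e; have -> : q = p by apply: functional_extensionality => z; rewrite e. Qed.

Lemma pf_opp X (p : (X -> k) -> k) : polyfun p -> polyfun (fun z => - p z).
Proof. move=> h; apply: (pf_ext _ (pf_mul (pf_const _ (-1)) h)) => z; by rewrite mulN1r. Qed.

Lemma pf_sub X (p q : (X -> k) -> k) : polyfun p -> polyfun q -> polyfun (fun z => p z - q z).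
Proof. by move=> hp hq; apply: pf_add => //; apply: pf_opp. Qed.

Lemma pf_sum X (I : Type) (r : seq I) (P : pred I) (F : I -> (X -> k) -> k) :
  (forall i, P i -> polyfun (F i)) -> polyfun (fun z => \sum_(i <- r | P i) F i z).
Proof.
move=> h; elim: r => [|i r IH].
  by apply: (pf_ext _ (pf_const _ 0)) => z; rewrite big_nil.
case Pi: (P i).
  by apply: (pf_ext _ (pf_add (h i Pi) IH)) => z; rewrite big_cons Pi.
by apply: (pf_ext _ IH) => z; rewrite big_cons Pi.
Qed.

Lemma pf_prod X (I : Type) (r : seq I) (P : pred I) (F : I -> (X -> k) -> k) :
  (forall i, P i -> polyfun (F i)) -> polyfun (fun z => \prod_(i <- r | P i) F i z).
Proof.
move=> h; elim: r => [|i r IH].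
  by apply: (pf_ext _ (pf_const _ 1)) => z; rewrite big_nil.
case Pi: (P i).
  by apply: (pf_ext _ (pf_mul (h i Pi) IH)) => z; rewrite big_cons Pi.
by apply: (pf_ext _ IH) => z; rewrite big_cons Pi.
Qed.

Definition pfm X m n (F : (X -> k) -> 'M[k]_(m, n)) := forall i j, polyfun (fun z => F z i j).

Lemma pfm_mul X m n p (F : (X -> k) -> 'M[k]_(m, n)) (G : (X -> k) -> 'M[k]_(n, p)) :
  pfm F -> pfm G -> pfm (fun z => F z *m G z).
Proof.
move=> hF hG i j; apply: (pf_ext (p := fun z => \sum_l F z i l * G z l j)).
  by move=> z; rewrite mxE.
by apply: pf_sum => l _; apply: pf_mul.
Qed.

Lemma pfm_add X m n (F G : (X -> k) -> 'M[k]_(m, n)) :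
  pfm F -> pfm G -> pfm (fun z => F z + G z).
Proof. by move=> hF hG i j; apply: (pf_ext _ (pf_add (hF i j) (hG i j))) => z; rewrite mxE. Qed.

Lemma pfm_opp X m n (F : (X -> k) -> 'M[k]_(m, n)) : pfm F -> pfm (fun z => - F z).
Proof. by move=> hF i j; apply: (pf_ext _ (pf_opp (hF i j))) => z; rewrite mxE. Qed.

Lemma pfm_scale X m n (s : (X -> k) -> k) (F : (X -> k) -> 'M[k]_(m, n)) :
  polyfun s -> pfm F -> pfm (fun z => s z *: F z).
Proof. by move=> hs hF i j; apply: (pf_ext _ (pf_mul hs (hF i j))) => z; rewrite mxE. Qed.

Lemma pfm_const X m n (A : 'M[k]_(m, n)) : pfm (fun _ : X -> k => A).
Proof. by move=> i j; apply: pf_const. Qed.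

Lemma pf_det X n (F : (X -> k) -> 'M[k]_n) : pfm F -> polyfun (fun z => \det (F z)).
Proof.
move=> hF; rewrite /determinant.
apply: pf_sum => s _; apply: pf_mul; first exact: pf_const.
by apply: pf_prod => i _; apply: hF.
Qed.

Lemma pfm_adj X n (F : (X -> k) -> 'M[k]_n) : pfm F -> pfm (fun z => \adj (F z)).
Proof.
move=> hF i j; apply: (pf_ext (p := fun z => cofactor (F z) j i)); first by move=> z; rewrite mxE.
rewrite /cofactor; apply: pf_mul; first exact: pf_const.
by apply: pf_det => i' j'; apply: (pf_ext _ (hF _ _)) => z; rewrite !mxE.
Qed.

Lemma pf_comp X Z (p : (X -> k) -> k) (g : (Z -> k) -> X -> k) :
  polyfun p -> (forall i, polyfun (fun z => g z i)) -> polyfun (fun z => p (g z)).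
Proof.
move=> hp hg; elim: hp => [c|i|p1 q1 _ IH1 _ IH2|p1 q1 _ IH1 _ IH2].
- exact: pf_const.
- exact: hg.
- exact: pf_add.
- exact: pf_mul.
Qed.

Lemma pf_line X (p : (X -> k) -> k) (z1 z2 : X -> k) : polyfun p ->
  exists q : {poly k}, forall t, q.[t] = p (fun i => z1 i + t * (z2 i - z1 i)).
Proof.
elim => [c|i|p1 q1 _ [r1 IH1] _ [r2 IH2]|p1 q1 _ [r1 IH1] _ [r2 IH2]].
- by exists c%:P => t; rewrite hornerC.
- by exists ((z1 i)%:P + 'X * (z2 i - z1 i)%:P) => t; rewrite hornerD hornerC hornerM hornerX hornerC.
- by exists (r1 + r2) => t; rewrite hornerD IH1 IH2.
- by exists (r1 * r2) => t; rewrite hornerM IH1 IH2.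
Qed.
End PF.

Lemma poly_nonroot (k : closedFieldType) (q : {poly k}) : q != 0 -> exists t, q.[t] != 0.
Proof.
move=> qn0; apply: not_all_not_ex => h.
have : size (q * 'X + 1%:P) != 1%N.
  rewrite size_MXaddC (negbTE qn0) /=.
  by have := size_poly_gt0 q; rewrite qn0; case: (size q).
case/closed_rootP => t; rewrite /root hornerD hornerM hornerX hornerC.
by move/negP: (h t); rewrite negbK => /eqP ->; rewrite mul0r add0r oner_eq0.
Qed.

Section Top.
Variable k : closedFieldType.

Definition cl (X : Type) (Z : (X -> k) -> Prop) : (X -> k) -> Prop :=
  fun y => forall p, polyfun p -> (forall z, Z z -> p z = 0) -> p y = 0.

Lemma cl_closed X (Z : (X -> k) -> Prop) : zclosed (cl Z).
Proof.
exists (fun p => polyfun p /\ forall z, Z z -> p z = 0); split; first by move=> p [].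
by move=> y; split => [h p [hp hz]|h p hp hz]; [apply: h|apply: h].
Qed.

Lemma sub_cl X (Z : (X -> k) -> Prop) : Defs.subsetP Z (cl Z).
Proof. by move=> y Zy p _ h; apply: h. Qed.

Lemma cl_min X (Z F : (X -> k) -> Prop) : zclosed F -> Defs.subsetP Z F -> Defs.subsetP (cl Z) F.
Proof.
move=> [S [hS eS]] ZF y cy; apply/eS => p Sp; apply: cy; first exact: hS.
by move=> z Zz; move/eS: (ZF z Zz); apply.
Qed.

Lemma cl_irr X (Z : (X -> k) -> Prop) : zirreducible Z -> zirreducible (cl Z).
Proof.
move=> [[z0 Z0] hZ]; split; first by exists z0; apply: sub_cl.
move=> F1 F2 c1 c2 hsub.
have : Defs.subsetP Z F1 \/ Defs.subsetP Z F2.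
  apply: hZ => // z Zz; apply: hsub; exact: sub_cl.
by case=> h; [left|right]; apply: cl_min.
Qed.

Lemma closed_pull X Z (F : (X -> k) -> Prop) (g : (Z -> k) -> X -> k) :
  zclosed F -> (forall i, polyfun (fun z => g z i)) -> zclosed (fun z => F (g z)).
Proof.
move=> [S [hS eS]] hg.
exists (fun P => exists p, S p /\ P = fun z => p (g z)); split.
  by move=> P [p [Sp ->]]; apply: pf_comp => //; apply: hS.
move=> z; split.
  by move/eS => h P [p [Sp ->]]; apply: h.
by move=> h; apply/eS => p Sp; apply: (h (fun z => p (g z))); exists p.
Qed.

Lemma image_irr X Z (g : (Z -> k) -> X -> k) :
  (forall i, polyfun (fun z => g z i)) ->
  zirreducible (fun y => exists z, g z = y).
Proof.
move=> hg; split; first by exists (g (fun _ => 0)); exists (fun _ => 0).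
move=> F1 F2 [S1 [hS1 e1]] [S2 [hS2 e2]] hsub.
apply: NNPP => /not_or_and [n1 n2].
have [z1 nz1] : exists z, ~ F1 (g z).
  apply: NNPP => hn; apply: n1 => y [z <-]; apply: NNPP => ny; apply: hn; by exists z.
have [z2 nz2] : exists z, ~ F2 (g z).
  apply: NNPP => hn; apply: n2 => y [z <-]; apply: NNPP => ny; apply: hn; by exists z.
have [p1 [S1p1 p1n]] : exists p, S1 p /\ p (g z1) != 0.
  apply: NNPP => hn; apply: nz1; apply/e1 => p Sp; apply/eqP; apply: NNPP => ne.
  by apply: hn; exists p; split => //; apply/negP.
have [p2 [S2p2 p2n]] : exists p, S2 p /\ p (g z2) != 0.
  apply: NNPP => hn; apply: nz2; apply/e2 => p Sp; apply/eqP; apply: NNPP => ne.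
  by apply: hn; exists p; split => //; apply/negP.
have [q1 hq1] := pf_line z1 z2 (pf_comp (hS1 _ S1p1) hg).
have [q2 hq2] := pf_line z1 z2 (pf_comp (hS2 _ S2p2) hg).
have l0 : (fun i => z1 i + 0 * (z2 i - z1 i)) = z1.
  by apply: functional_extensionality => i; rewrite mul0r addr0.
have l1 : (fun i => z1 i + 1 * (z2 i - z1 i)) = z2.
  by apply: functional_extensionality => i; rewrite mul1r addrC subrK.
have : q1 * q2 == 0.
  apply: contraT => nz; case: (poly_nonroot nz) => t; rewrite hornerM hq1 hq2.
  have [] : F1 (g (fun i => z1 i + t * (z2 i - z1 i))) \/ F2 (g (fun i => z1 i + t * (z2 i - z1 i))).
    by apply: hsub; eexists.
  - by move/e1 => h; rewrite (h _ S1p1) mul0r eqxx.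
  - by move/e2 => h; rewrite (h _ S2p2) mulr0 eqxx.
rewrite mulf_eq0 => /orP [] /eqP q0.
- by move: p1n; have := hq1 0; rewrite q0 horner0 l0 => <-; rewrite eqxx.
- by move: p2n; have := hq2 1; rewrite q0 horner0 l1 => <-; rewrite eqxx.
Qed.
End Top.

Section Main.
Variables (k : closedFieldType) (a b c u v w : nat) (f : 'I_u -> 'I_v -> 'I_w -> k).
Local Notation pt := (rep_coord a b c u v w -> k).
Local Notation Y := (@Rfa k a b c u v w f).
Local Notation TN := ('I_a * 'I_u * 'I_v)%type.
Local Notation TM := (('I_a * 'I_w) + ('I_b * 'I_v))%type.
Local Notation TA := ('I_a * 'I_u * 'I_b)%type.

Definition ment (z : TA -> k) (x : TN) (s : TM) : k :=
  let: (p, i, j) := x in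
  match s with
  | inl (p', l) => if p == p' then f i j l else 0
  | inr (q, j') => if j == j' then z (p, i, q) else 0
  end.

Definition Mz (z : TA -> k) : 'M[k]_(#|{: TN}|, #|{: TM}|) :=
  \matrix_(r, s) ment z (enum_val r) (enum_val s).

Definition phient (y : pt) (s : TM) (r : 'I_c) : k :=
  match s with
  | inl (p, l) => - phi02 y p l r
  | inr (q, j) => phi12 y q j r
  end.

Definition Phiy (y : pt) : 'M[k]_(#|{: TM}|, c) := \matrix_(s, r) phient y (enum_val s) r.

Lemma pair_sum (A B : finType) (F : A * B -> k) : \sum_x F x = \sum_a \sum_b F (a, b).
Proof. by rewrite pair_bigA; apply: eq_bigr => -[]. Qed.

Lemma sum_sum (A B : finType) (F : A + B -> k) : \sum_x F x = \sum_a F (inl a) + \sum_b F (inr b).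
Proof. by rewrite big_sumType. Qed.

Lemma sum_TM (G : TM -> k) : \sum_(s < #|{: TM}|) G (enum_val s) =
  \sum_p \sum_l G (inl (p, l)) + \sum_q \sum_j G (inr (q, j)).
Proof.
rewrite -(big_enum_val G) /= (eq_bigl xpredT) // sum_sum.
by rewrite (pair_sum (fun x => G (inl x))) (pair_sum (fun x => G (inr x))).
Qed.

Lemma sum_TN (G : TN -> k) : \sum_(s < #|{: TN}|) G (enum_val s) =
  \sum_p \sum_i \sum_j G (p, i, j).
Proof.
rewrite -(big_enum_val G) /= (eq_bigl xpredT) // pair_sum.
by rewrite (pair_sum (fun x => \sum_b G (x, b))).
Qed.

Lemma sum_if (I : finType) (x0 : I) (A B : I -> k) :
  \sum_x (if x0 == x then A x else 0) * B x = A x0 * B x0.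
Proof.
rewrite (bigD1 x0) //= eqxx big1 ?addr0 // => x /negbTE.
by rewrite eq_sym => ->; rewrite mul0r.
Qed.

Lemma MPhi (y : pt) p i j r :
  (Mz (proj01 y) *m Phiy y) (enum_rank (p, i, j)) r =
  \sum_q phi01 y p i q * phi12 y q j r - \sum_l f i j l * phi02 y p l r.
Proof.
rewrite mxE.
under eq_bigr do rewrite !mxE enum_rankK.
rewrite (sum_TM (fun s => ment (proj01 y) (p, i, j) s * phient y s r)) /=.
rewrite (bigD1 p) //=.
rewrite [X in _ + X + _]big1 ?addr0; last first.
  move=> p' /negbTE; rewrite eq_sym => ->; apply: big1 => l _; exact: mul0r.
rewrite eqxx addrC -sumrN; congr (_ + _); last by apply: eq_bigr => l _; rewrite mulrN.
by apply: eq_bigr => q _; rewrite sum_if.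
Qed.

Lemma Rfa_M (y : pt) : Y y <-> Mz (proj01 y) *m Phiy y = 0.
Proof.
split.
  move=> h; apply/matrixP => x r; rewrite [RHS]mxE -(enum_valK x).
  case: (enum_val x) => [[p i] j]; by rewrite MPhi h subrr.
move=> h p i j r; apply/eqP; rewrite -subr_eq0 -MPhi h mxE //.
Qed.

Lemma tM (z : TA -> k) (t : 'rV[k]_#|{: TN}|) (s : TM) :
  (t *m Mz z) 0 (enum_rank s) =
  match s with
  | inl (p, l) => \sum_i \sum_j f i j l * t 0 (enum_rank (p, i, j))
  | inr (q, j) => \sum_p \sum_i z (p, i, q) * t 0 (enum_rank (p, i, j))
  end.
Proof.
rewrite mxE.
under eq_bigr => x _ do rewrite !mxE enum_rankK -[x in t 0 x](enum_valK x).
rewrite (sum_TN (fun x => t 0 (enum_rank x) * ment z x s)) /=.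
case: s => [[p l]|[q j]].
  rewrite (bigD1 p) //= [X in _ + X]big1 ?addr0; last first.
    move=> p' /negbTE ->; apply: big1 => i _; apply: big1 => j _; exact: mulr0.
  rewrite eqxx; apply: eq_bigr => i _; apply: eq_bigr => j _; exact: mulrC.
apply: eq_bigr => p _; apply: eq_bigr => i _.
rewrite (bigD1 j) //= big1 ?addr0; last first.
  by move=> j' /negbTE ->; rewrite mulr0.
by rewrite eqxx mulrC.
Qed.

Local Notation m := #|{: TM}|.
Local Notation n := #|{: TN}|.
Local Notation ZT := (TA + ('I_m * 'I_n) + ('I_m * 'I_c))%type.

Definition zA (z : ZT -> k) : TA -> k := fun q => z (inl (inl q)).
Definition zB (z : ZT -> k) : 'M[k]_(m, n) := \matrix_(s, r) z (inl (inr (s, r))).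
Definition zT (z : ZT -> k) : 'M[k]_(m, c) := \matrix_(s, r) z (inr (s, r)).
Definition Pm (z : ZT -> k) : 'M[k]_m :=
  \det (Mz (zA z) *m zB z) *: 1%:M - zB z *m \adj (Mz (zA z) *m zB z) *m Mz (zA z).
Definition Phi (z : ZT -> k) : 'M[k]_(m, c) := Pm z *m zT z.
Definition Psi (z : ZT -> k) : pt := fun co =>
  match co with
  | inl (inl (p, i, q)) => zA z (p, i, q)
  | inl (inr (q, j, r)) => Phi z (enum_rank (inr (q, j) : TM)) r
  | inr (p, l, r) => - Phi z (enum_rank (inl (p, l) : TM)) r
  end.

Lemma proj01_Psi z : proj01 (Psi z) = zA z.
Proof. by apply: functional_extensionality => -[[p i] q]. Qed.

Lemma Phiy_Psi z : Phiy (Psi z) = Phi z.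
Proof.
apply/matrixP => s r; rewrite mxE -[in RHS](enum_valK s).
by case: (enum_val s) => [[p l]|[q j]] /=; rewrite /phi02 /phi12 /= ?opprK.
Qed.

Lemma MPm z : Mz (zA z) *m Pm z = 0.
Proof.
rewrite /Pm mulmxBr -scalemxAr mulmx1 !mulmxA mul_mx_adj mul_scalar_mx.
by rewrite subrr.
Qed.

Lemma Psi_Y z : Y (Psi z).
Proof. by apply/Rfa_M; rewrite proj01_Psi Phiy_Psi /Phi mulmxA MPm mul0mx. Qed.

Definition Good (z : TA -> k) := exists B : 'M[k]_(m, n), \det (Mz z *m B) != 0.

Lemma Psi_onto y : Y y -> Good (proj01 y) -> exists z, Psi z = y.
Proof.
move=> /Rfa_M hY [B hB].
set d := \det (Mz (proj01 y) *m B).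
pose z : ZT -> k := fun co => match co with
  | inl (inl q) => proj01 y q
  | inl (inr (s, r)) => B s r
  | inr (s, r) => (d^-1 *: Phiy y) s r end.
have eA : zA z = proj01 y by [].
have eB : zB z = B by apply/matrixP => s r; rewrite mxE.
have eT : zT z = d^-1 *: Phiy y by apply/matrixP => s r; rewrite mxE.
have ePhi : Phi z = Phiy y.
  rewrite /Phi /Pm eA eB eT -/d mulmxBl -!scalemxAr -!mulmxA hY !mulmx0 scaler0 subr0.
  by rewrite -scalemxAl mul1mx scalerA mulVf // scale1r.
exists z; apply: functional_extensionality => -[[[[p i] q]|[[q j] r]]|[[p l] r]] /=.
- by [].
- by rewrite ePhi mxE enum_rankK.
- by rewrite ePhi mxE enum_rankK /= opprK.
Qed.

Lemma pfm_Mz (X : Type) (g : (X -> k) -> TA -> k) :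
  (forall q, polyfun (fun x => g x q)) -> pfm (fun x => Mz (g x)).
Proof.
move=> hg r s; apply: (pf_ext (p := fun x => ment (g x) (enum_val r) (enum_val s))).
  by move=> x; rewrite mxE.
rewrite /ment; case: (enum_val r) => [[p i] j]; case: (enum_val s) => [[p' l]|[q j']];
  case: eqP => _; (apply: pf_const || apply: hg).
Qed.

Lemma pfm_zB : pfm zB.
Proof. by move=> s r; apply: (pf_ext _ (pf_coord _ (inl (inr (s, r))))) => z; rewrite mxE. Qed.

Lemma pfm_zT : pfm zT.
Proof. by move=> s r; apply: (pf_ext _ (pf_coord _ (inr (s, r)))) => z; rewrite mxE. Qed.

Lemma pfm_Phi : pfm Phi.
Proof.
have hM : pfm (fun z => Mz (zA z)) by apply: pfm_Mz => q; apply: pf_coord.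
have hMB := pfm_mul hM pfm_zB.
have hd := pf_det hMB.
have hP : pfm Pm.
  exact: (pfm_add (pfm_scale hd (pfm_const _ _))
            (pfm_opp (pfm_mul (pfm_mul pfm_zB (pfm_adj hMB)) hM))).
exact: (pfm_mul hP pfm_zT).
Qed.

Lemma pf_Psi co : polyfun (fun z => Psi z co).
Proof.
case: co => [[[[p i] q]|[[q j] r]]|[[p l] r]].
- exact: pf_coord.
- exact: pfm_Phi.
- exact: (pf_opp (pfm_Phi _ _)).
Qed.

Lemma Y_closed : zclosed (Y).
Proof.
exists (fun P => exists p i j r, P = fun y : pt =>
  \sum_q phi01 y p i q * phi12 y q j r - \sum_l f i j l * phi02 y p l r).
split.
  move=> P [p [i [j [r ->]]]]; apply: pf_sub; apply: pf_sum => q _; apply: pf_mul;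
    (apply: pf_coord || apply: pf_const).
move=> y; split.
  by move=> h P [p [i [j [r ->]]]]; rewrite h subrr.
move=> h p i j r; apply/eqP; rewrite -subr_eq0; apply/eqP.
exact: (h _ (ex_intro _ p (ex_intro _ i (ex_intro _ j (ex_intro _ r erefl))))).
Qed.

Definition Dz (z : TA -> k) := forall B : 'M[k]_(m, n), \det (Mz z *m B) = 0.

Lemma Dz_closed : zclosed Dz.
Proof.
exists (fun P => exists B : 'M[k]_(m, n), P = fun z => \det (Mz z *m B)); split.
  move=> P [B ->]; apply: pf_det; apply: pfm_mul; last exact: pfm_const.
  by apply: pfm_Mz => q; apply: pf_coord.
move=> z; split; first by move=> h P [B ->]; apply: h.
by move=> h B; exact: (h _ (ex_intro _ B erefl)).
Qed.

Lemma Dy_closed : zclosed (fun y : pt => Dz (proj01 y)).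
Proof. by apply: closed_pull; [exact: Dz_closed | move=> q; apply: pf_coord]. Qed.

Lemma Good_x (x : pt) : ker_map_injective f x -> Good (proj01 x).
Proof.
move=> hx.
have : row_free (Mz (proj01 x)).
  apply: inj_row_free => t ht.
  pose T p i j := t 0 (enum_rank (p, i, j)).
  have hT : forall p i j, T p i j = 0.
    apply: hx.
      move=> p l; have := tM (proj01 x) t (inl (p, l)); rewrite ht mxE /= => <-.
      by [].
    move=> q j; have := tM (proj01 x) t (inr (q, j)); rewrite ht mxE /= => e.
    exact: (esym e).
  apply/matrixP => i0 r; rewrite [RHS]mxE (ord1 i0) -(enum_valK r).
  by case: (enum_val r) => [[p i] j]; apply: hT.
case/row_freeP => B hB; exists B; by rewrite hB det1 oner_neq0.
Qed.

Lemma main_thm (x : pt) : Y x -> ker_map_injective f x ->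
  (exists C, irr_component (Y) C /\ left_general C /\ C x) /\
  (forall C, irr_component (Y) C -> left_general C -> C x).
Proof.
move=> hY hinj.
pose Im := fun y : pt => exists z, Psi z = y.
pose C0 := cl Im.
have C0_irr : zirreducible C0 by apply: cl_irr; apply: image_irr; exact: pf_Psi.
have C0_Y : Defs.subsetP C0 (Y).
  by apply: cl_min; [exact: Y_closed | move=> y [z <-]; exact: Psi_Y].
have hG := Good_x hinj.
have x_C0 : C0 x by apply: sub_cl; apply: Psi_onto.
have nDx : ~ Dz (proj01 x) by case: hG => B hB h; move: hB; rewrite h eqxx.
have cover : Defs.subsetP (Y) (fun y => C0 y \/ Dz (proj01 y)).
  move=> y hy; case: (classic (Good (proj01 y))) => [g|ng].
    by left; apply: sub_cl; apply: Psi_onto.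
  right => B; apply/eqP; apply: NNPP => ne; apply: ng; exists B; exact/negP.
split.
  exists C0; split; last split.
  - split; [exact: cl_closed | exact: C0_Y | exact: C0_irr |].
    move=> C' [_ C'i] sub C'Y.
    case: (C'i C0 (fun y => Dz (proj01 y)) (cl_closed _) Dy_closed
             (fun y h => cover y (C'Y y h))) => // hD.
    by exfalso; apply: nDx; apply: hD; apply: sub.
  - move=> F _ hF A; apply: hF.
    pose zz : ZT -> k := fun co => match co with inl (inl q) => A q | _ => 0 end.
    exists (Psi zz); split; first by apply: sub_cl; exists zz.
    by rewrite proj01_Psi.
  - exact: x_C0.
move=> C [Ccl CY [_ Ci] Cmax] Clg.
case: (Ci C0 (fun y => Dz (proj01 y)) (cl_closed _) Dy_closed
         (fun y h => cover y (CY y h))) => hC.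
  by apply: (Cmax C0 C0_irr hC C0_Y).
exfalso; apply: nDx; apply: (Clg Dz Dz_closed) => A [y [Cy <-]]; exact: hC.
Qed.

End Main.

Theorem lemma3p2 (k : closedFieldType) (a b c u v w : nat)
  (f : 'I_u -> 'I_v -> 'I_w -> k)
  (x : rep_coord a b c u v w -> k) :
  surjective_mult f ->
  Rfa f x ->
  ker_map_injective f x ->
  (exists C, irr_component (Rfa f) C /\ left_general C /\ C x) /\
  (forall C, irr_component (Rfa f) C -> left_general C -> C x).
Proof.
move=> _ hY hinj; exact: (main_thm hY hinj).
Qed.
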